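(* Let $\mathcal{C}$ be a quasicategory. Then $\mathrm{Ex}\,\mathcal{C}$ is a Kan complex if and only if $\mathcal{C}^\sharp$ satisfies calculus of left fractions (CLF).
   Context: $\mathrm{Ex}$ is Kan's functor: $(\mathrm{Ex}\,X)_n=\mathrm{Hom}(\mathrm{sd}\,\Delta^n, X)$ where $\mathrm{sd}\,\Delta^n$ is the nerve of the poset of non-empty subsets of $[n]=\{0,\dots,n\}$ ordered by inclusion. $\mathcal{C}^\sharp$ denotes $\mathcal{C}$ with all $1$-simplices marked. A marked simplicial set is a pair $(X,W)$ with $W\subseteq X_1$ containing the degenerate $1$-simplices. For $n\ge 0$, $0\le k\le n$, $\mathrm{L}^n_k$ is the nerve of the poset of subsets $A\subseteq[n]$ with $k\in A$ ordered by inclusion, where $A_0\subseteq A_1$ is marked iff $\max A_0=\max A_1$; $\mathrm{LJ}^n_k\subseteq \mathrm{L}^n_k$ is the maximal simplicial subset not containing the vertex $[n]$. $W$ is weakly closed under composition if every map $\Lambda^2_1\to X$ with both edges marked extends to a $2$-simplex all of whose edges are marked. A marked quasicategory $(\mathcal{C},W)$ satisfies CLF if $W$ is weakly closed under composition and $(\mathcal{C},W)$ has the right lifting property (in marked simplicial sets) against all $\mathrm{LJ}^n_k\hookrightarrow\mathrm{L}^n_k$ with $n\ge2$, $0<k\le n$. *)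

(* Defs.v *)
From Stdlib Require Import FunctionalExtensionality ProofIrrelevance.
From mathcomp Require Import all_boot.
Set Implicit Arguments. Unset Strict Implicit. Unset Printing Implicit Defensive.

Record dmap (m n : nat) := DMap {
  dfun :> 'I_m.+1 -> 'I_n.+1;
  dmono : forall i j : 'I_m.+1, i <= j -> dfun i <= dfun j }.

Definition did (n : nat) : dmap n n := @DMap n n (fun i => i) (fun i j h => h).
Definition dcomp l m n (g : dmap m n) (f : dmap l m) : dmap l n :=
  @DMap l n (fun i => g (f i)) (fun i j h => dmono g (dmono f h)).

Record sSet := SSet {
  sob :> nat -> Type;
  sact : forall m n, dmap m n -> sob n -> sob m;
  sact_id : forall n (x : sob n), sact (did n) x = x;
  sact_comp : forall l m n (f : dmap l m) (g : dmap m n) (x : sob n),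
      sact (dcomp g f) x = sact f (sact g x) }.
Arguments sact s {m n} f x.

Record sMap (X Y : sSet) := SMap {
  smap :> forall n, X n -> Y n;
  snat : forall m n (f : dmap m n) (x : X n), smap (sact X f x) = sact Y f (smap x) }.

Lemma sig_eqPI (A : Type) (P : A -> Prop) (a b : {x | P x}) :
  sval a = sval b -> a = b.
Proof. case: a b => [a pa] [b pb] /= E; subst; f_equal; exact: proof_irrelevance. Qed.

Lemma sMap_eq (X Y : sSet) (h h' : sMap X Y) :
  (forall n x, h n x = h' n x) -> h = h'.
Proof.
case: h h' => [h hn] [h' hn'] /= E.
have E' : h = h' by apply: functional_extensionality_dep => n;
  apply: functional_extensionality => x; exact: E.
subst; f_equal; exact: proof_irrelevance.
Qed.

Definition nerve_ob (P : Type) (le : P -> P -> Prop) (n : nat) :=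
  { c : 'I_n.+1 -> P | forall i j : 'I_n.+1, i <= j -> le (c i) (c j) }.

Definition nerve_act (P : Type) (le : P -> P -> Prop) m n (f : dmap m n)
  (c : nerve_ob le n) : nerve_ob le m :=
  exist (fun d : 'I_m.+1 -> P => forall i j : 'I_m.+1, i <= j -> le (d i) (d j))
    (fun i => sval c (f i)) (fun i j h => proj2_sig c _ _ (dmono f h)).

Definition nerve (P : Type) (le : P -> P -> Prop) : sSet.
Proof.
refine (@SSet (nerve_ob le) (@nerve_act P le) _ _).
- by move=> n c; apply: sig_eqPI.
- by move=> l m n f g c; apply: sig_eqPI.
Defined.

Definition subsSet (X : sSet) (S : forall n, X n -> Prop)
  (HS : forall m n (f : dmap m n) x, S n x -> S m (sact X f x)) : sSet.
Proof.
refine (@SSet (fun n => {x : X n | S n x})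
  (fun m n f x => exist (fun y => S m y) (sact X f (sval x)) (HS m n f (sval x) (proj2_sig x))) _ _).
- by move=> n x; apply: sig_eqPI; rewrite /= sact_id.
- by move=> l m n f g x; apply: sig_eqPI; rewrite /= sact_comp.
Defined.

Definition Delta (n : nat) : sSet := nerve (fun i j : 'I_n.+1 => i <= j).

(* Lambda^n_k : the union of the faces d_j, j <> k, of Delta^n *)
Definition hornP (n : nat) (k : 'I_n.+1) m (c : Delta n m) : Prop :=
  exists j : 'I_n.+1, j != k /\ forall i, sval c i != j.

Lemma hornP_closed n (k : 'I_n.+1) m p (f : dmap m p) (c : Delta n p) :
  hornP k c -> hornP k (sact (Delta n) f c).
Proof. by case=> j [jk H]; exists j; split => // i; apply: H. Qed.

Definition horn (n : nat) (k : 'I_n.+1) : sSet := subsSet (@hornP_closed n k).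

Definition extends_horn (X : sSet) n (k : 'I_n.+1)
  (g : sMap (horn k) X) (h : sMap (Delta n) X) : Prop :=
  forall p (y : horn k p), h p (sval y) = g p y.

Definition quasicategory (X : sSet) : Prop :=
  forall n (k : 'I_n.+1), 0 < k -> k < n ->
  forall g : sMap (horn k) X, exists h : sMap (Delta n) X, extends_horn g h.

Definition Kan_complex (X : sSet) : Prop :=
  forall n (k : 'I_n.+1), 0 < n ->
  forall g : sMap (horn k) X, exists h : sMap (Delta n) X, extends_horn g h.

Definition NE (n : nat) := { A : {set 'I_n.+1} | A != set0 }.
Definition sd (n : nat) : sSet := nerve (fun A B : NE n => sval A \subset sval B).

Definition NE_img m n (f : dmap m n) (A : NE m) : NE n :=
  exist (fun B : {set 'I_n.+1} => B != set0) (f @: sval A) (eq_ind_r (fun b => ~~ b) (proj2_sig A) (imset_eq0 f (sval A))).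

Definition sd_fun m n (f : dmap m n) p (c : sd m p) : sd n p :=
  exist (fun d : 'I_p.+1 -> NE n => forall i j : 'I_p.+1, i <= j -> sval (d i) \subset sval (d j))
    (fun i => NE_img f (sval c i))
    (fun i j h => imsetS f (proj2_sig c i j h)).

Definition sd_map m n (f : dmap m n) : sMap (sd m) (sd n).
Proof. by refine (@SMap _ _ (@sd_fun m n f) _) => p q g c; apply: sig_eqPI. Defined.

Definition sMap_comp (X Y Z : sSet) (g : sMap Y Z) (f : sMap X Y) : sMap X Z.
Proof.
by refine (@SMap X Z (fun n x => g n (f n x)) _) => m n h x; rewrite !snat.
Defined.

Lemma sd_fun_id n p (c : sd n p) : sd_fun (did n) c = c.
Proof.
apply: sig_eqPI; apply: functional_extensionality => i /=.
by apply: sig_eqPI; rewrite /= imset_id.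
Qed.

Lemma sd_fun_comp l m n (f : dmap l m) (g : dmap m n) p (c : sd l p) :
  sd_fun (dcomp g f) c = sd_fun g (sd_fun f c).
Proof.
apply: sig_eqPI; apply: functional_extensionality => i /=.
by apply: sig_eqPI; rewrite /= imset_comp.
Qed.

Definition Ex (X : sSet) : sSet.
Proof.
refine (@SSet (fun n => sMap (sd n) X)
  (fun m n f x => sMap_comp x (sd_map f)) _ _).
- by move=> n x; apply: sMap_eq => p c /=; rewrite sd_fun_id.
- by move=> l m n f g x; apply: sMap_eq => p c /=; rewrite sd_fun_comp.
Defined.

Definition s0 : dmap 1 0 := @DMap 1 0 (fun _ => ord0) (fun _ _ _ => leqnn 0).

Record msSet := MSSet {
  msX :> sSet;
  mW : msX 1 -> Prop;
  mW_degen : forall x : msX 0, mW (sact msX s0 x) }.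

Record msMap (X Y : msSet) := MSMap {
  msm :> sMap X Y;
  msm_mark : forall e : X 1, mW e -> mW (msm 1 e) }.

Definition sharp (C : sSet) : msSet := @MSSet C (fun _ => True) (fun _ => I).

Definition msub (X : msSet) (S : forall n, X n -> Prop)
  (HS : forall m n (f : dmap m n) x, S n x -> S m (sact X f x)) : msSet :=
  @MSSet (subsSet HS) (fun e => mW (sval e)) (fun x => mW_degen (sval x)).

Definition LPos (n : nat) (k : 'I_n.+1) := { A : {set 'I_n.+1} | k \in A }.

Definition maxs n (A : {set 'I_n.+1}) : nat := \max_(i in A) (i : nat).

Definition Lnerve n (k : 'I_n.+1) : sSet :=
  nerve (fun A B : LPos k => sval A \subset sval B).

Definition L n (k : 'I_n.+1) : msSet :=
  @MSSet (Lnerve k)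
    (fun e => maxs (sval (sval e ord0)) = maxs (sval (sval e ord_max)))
    (fun x => erefl).

(* simplices (chains) not containing the vertex [n] *)
Definition LJP n (k : 'I_n.+1) m (c : Lnerve k m) : Prop :=
  forall i, sval (sval c i) != [set: 'I_n.+1].

Lemma LJP_closed n (k : 'I_n.+1) m p (f : dmap m p) (c : Lnerve k p) :
  LJP c -> LJP (sact (Lnerve k) f c).
Proof. by move=> H i; apply: H. Qed.

Definition LJ n (k : 'I_n.+1) : msSet := @msub (L k) _ (@LJP_closed n k).

Definition weakly_closed_comp (X : msSet) : Prop :=
  forall g : sMap (horn (@Ordinal 3 1 erefl)) X,
    (forall e, mW (g 1 e)) ->
    exists h : sMap (Delta 2) X, extends_horn g h /\ forall e, mW (h 1 e).

Definition CLF (X : msSet) : Prop :=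
  weakly_closed_comp X /\
  forall n (k : 'I_n.+1), 2 <= n -> 0 < k ->
  forall g : msMap (LJ k) X, exists h : msMap (L k) X,
    forall p (y : LJ k p), h p (sval y) = g p y.

(* Main.v *)
From Stdlib Require Import ClassicalEpsilon ProofIrrelevance FunctionalExtensionality Classical Lia.
Require Import Defs.
From mathcomp Require Import all_boot zify.
Set Implicit Arguments. Unset Strict Implicit. Unset Printing Implicit Defensive.

Section Retr.
Variable n : nat.
Implicit Types E : {set 'I_n.+1}.

Definition piR E (x : 'I_n.+1) : 'I_n.+1 :=
  match [pick e in E | e <= x] with
  | Some w => [arg max_(e > w | (e \in E) && (e <= x)) (e : nat)]
  | None => match [pick e in E] with
            | Some w => [arg min_(e < w | e \in E) (e : nat)]
            | None => x end
  end.

Lemma piR_in E x : E != set0 -> piR E x \in E.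
Proof.
move=> E0; rewrite /piR; case: pickP => [w /andP[wE wx]|nw].
  by case: arg_maxnP => [|i /andP[]]//; rewrite wE.
case: pickP => [w wE|nE]; first by case: arg_minnP.
by case/set0Pn: E0 => e; rewrite nE.
Qed.

Lemma piR_id E x : x \in E -> piR E x = x.
Proof.
move=> xE; rewrite /piR; case: pickP => [w /andP[wE wx]|nw]; last first.
  by move: (nw x); rewrite xE leqnn.
case: arg_maxnP => [|i /andP[iE ix] H]; first by rewrite wE.
by apply/val_inj/eqP; rewrite eqn_leq ix; apply: H; rewrite xE leqnn.
Qed.

Lemma piR_mono E (x y : 'I_n.+1) : x <= y -> piR E x <= piR E y.
Proof.
move=> xy; rewrite /piR.
case: (pickP (fun e => (e \in E) && (e <= x))) => [w /andP[wE wx]|nw].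
  case: arg_maxnP => [|i /andP[iE ix] Hi]; first by rewrite wE.
  case: pickP => [w' /andP[w'E w'y]|nw']; last by move: (nw' i); rewrite iE (leq_trans ix xy).
  case: arg_maxnP => [|i' /andP[i'E i'y] Hi']; first by rewrite w'E.
  by apply: Hi'; rewrite iE (leq_trans ix xy).
case: pickP => [w wE|nE].
  case: arg_minnP => // i iE Hi.
  case: pickP => [w' /andP[w'E w'y]|nw'].
    case: arg_maxnP => [|i' /andP[i'E i'y] Hi']; first by rewrite w'E.
    by apply: leq_trans (Hi _ i'E) _.
  by [].
by move: (nE x); case: pickP => [w' /andP[w'E _]|]; [rewrite nE in w'E|].
Qed.

Definition piD E : dmap n n := @DMap n n (piR E) (fun i j h => piR_mono E h).

End Retr.

Definition delta_of n p (f : dmap p n) : Delta n p :=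
  exist (fun c : 'I_p.+1 -> 'I_n.+1 => forall i j : 'I_p.+1, i <= j -> c i <= c j)
    (dfun f) (@dmono _ _ f).
Definition dmap_of n p (c : Delta n p) : dmap p n := @DMap p n (sval c) (proj2_sig c).

Lemma hornP_piR n (k : 'I_n.+1) (E : {set 'I_n.+1}) (j : 'I_n.+1) :
  E != set0 -> j \notin E -> j != k -> hornP k (delta_of (piD E)).
Proof.
move=> E0 jE jk; exists j; split=> // i /=; apply/eqP=> e.
by move: (piR_in i E0); rewrite e (negbTE jE).
Qed.

Section Dir1.
Variables (C : sSet) (n : nat) (k : 'I_n.+1).

Definition LJchain p (c : 'I_p.+1 -> 'I_n.+1) q (B : sd p q) : 'I_q.+1 -> LPos k :=
  fun i => exist (fun A : {set 'I_n.+1} => k \in A) (k |: (c @: sval (sval B i))) (setU11 k _).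

Definition mkL p (c : 'I_p.+1 -> 'I_n.+1) q (B : sd p q) : Lnerve k q.
Proof.
refine (exist _ (LJchain c B) _).
by move=> i j ij /=; apply: setUS; apply: imsetS; apply: (proj2_sig B).
Defined.

Definition mkLJ p (y : horn k p) q (B : sd p q) : LJ k q.
Proof.
refine (exist _ (mkL (sval (sval y)) B) _).
case: y => [c [j [jk Hj]]] i /=; apply/eqP => E.
have : j \in k |: (sval c @: sval (sval B i)) by rewrite E inE.
rewrite !inE (negbTE jk) /=; case/imsetP => x _ /eqP; by rewrite eq_sym (negbTE (Hj x)).
Defined.

Lemma mkLJ_nat p (y : horn k p) q q' (f : dmap q' q) (B : sd p q) :
  mkLJ y (sact (sd p) f B) = sact (LJ k) f (mkLJ y B).
Proof. by apply: sig_eqPI; apply: sig_eqPI. Qed.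

Lemma mkLJ_nat2 p p' (f : dmap p' p) (y : horn k p) q (B : sd p' q) :
  mkLJ (sact (horn k) f y) B = mkLJ y (sd_fun f B).
Proof.
apply: sig_eqPI; apply: sig_eqPI; apply: functional_extensionality => i /=.
by apply: sig_eqPI; rewrite /= -imset_comp.
Qed.

Variable g : sMap (LJ k) C.

Definition hEx p (y : horn k p) : Ex C p.
Proof.
refine (@SMap (sd p) C (fun q B => g q (mkLJ y B)) _).
by move=> q q' f B; rewrite mkLJ_nat snat.
Defined.

Definition hornEx : sMap (horn k) (Ex C).
Proof.
refine (@SMap (horn k) (Ex C) hEx _).
move=> p p' f y; apply: sMap_eq => q B /=.
by rewrite mkLJ_nat2.
Defined.
End Dir1.

Lemma piR_imset n (A B : {set 'I_n.+1}) : B \subset A -> (piR A) @: B = B.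
Proof.
move=> BA; rewrite -[RHS]imset_id; apply: eq_in_imset => x xB.
by apply: piR_id; apply: (subsetP BA).
Qed.

Section Dir1b.
Variables (C : sSet) (n : nat) (k : 'I_n.+1).

Lemma LPos_nz (A : LPos k) : sval A != set0.
Proof. by apply/set0Pn; exists k; exact: (proj2_sig A). Qed.

Definition LtoSd q (x : Lnerve k q) : sd n q.
Proof.
refine (exist _ (fun i => exist (fun B : {set 'I_n.+1} => B != set0) (sval (sval x i)) (LPos_nz (sval x i))) _).
by move=> i j ij /=; exact: (proj2_sig x i j ij).
Defined.

Lemma LtoSd_nat q q' (f : dmap q' q) (x : Lnerve k q) :
  LtoSd (sact (Lnerve k) f x) = sact (sd n) f (LtoSd x).
Proof. by apply: sig_eqPI; apply: functional_extensionality => i; apply: sig_eqPI. Qed.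

Definition KofH (H0 : Ex C n) : sMap (Lnerve k) C.
Proof.
refine (@SMap (Lnerve k) C (fun q x => H0 q (LtoSd x)) _).
by move=> q q' f x; rewrite LtoSd_nat snat.
Defined.

Lemma dir1 : Kan_complex (Ex C) -> 2 <= n -> 0 < k ->
  forall g : msMap (LJ k) (sharp C), exists h : msMap (L k) (sharp C),
    forall p (y : LJ k p), h p (sval y) = g p y.
Proof.
move=> KC n2 k0 g.
have [h0 Hh0] := KC n k (leq_trans (isT : 0 < 2) n2) (hornEx g).
pose H0 := h0 n (delta_of (did n)).
exists (@MSMap (L k) (sharp C) (KofH H0) (fun _ _ => I)) => p y /=.
pose A := sval (sval (sval y) ord_max).
have AT : A != setT := proj2_sig y ord_max.
have kA : k \in A := proj2_sig (sval (sval y) ord_max).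
have [j jA] : exists j, j \notin A.
  by apply/existsP; move: AT; apply: contraR; rewrite negb_exists => /forallP H;
     apply/eqP/setP => x; rewrite inE; move: (H x); rewrite negbK.
have jk : j != k by apply: contraNneq jA => ->.
have A0 : A != set0 by apply/set0Pn; exists k.
pose yh := exist (fun c => hornP k c) (delta_of (piD A)) (hornP_piR A0 jA jk) : horn k n.
have E1 : LtoSd (sval y) = sd_fun (piD A) (LtoSd (sval y)).
  apply: sig_eqPI; apply: functional_extensionality => i; apply: sig_eqPI => /=.
  rewrite piR_imset //; exact: (proj2_sig (sval y) i ord_max (leq_ord i)).
have E2 : sact (Delta n) (piD A) (delta_of (did n)) = delta_of (piD A) by apply: sig_eqPI.
rewrite E1.
have -> : H0 p (sd_fun (piD A) (LtoSd (sval y))) = sact (Ex C) (piD A) H0 p (LtoSd (sval y)) by [].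
rewrite /H0 -snat E2.
have -> : delta_of (piD A) = sval yh by [].
rewrite Hh0 /=.
congr (g p _); apply: sig_eqPI; apply: sig_eqPI; apply: functional_extensionality => i.
apply: sig_eqPI => /=; rewrite piR_imset; last exact: (proj2_sig (sval y) i ord_max (leq_ord i)).
by apply/setUidPr; rewrite sub1set; exact: (proj2_sig (sval (sval y) i)).
Qed.
End Dir1b.

Section Enum.
Variable n : nat.
Local Notation SS := {set 'I_n.+1}.
Implicit Types (V : {set SS}) (A B : SS).

Definition chainset (V : {set SS}) :=
  forall A B, A \in V -> B \in V -> (A \subset B) || (B \subset A).

Definition leC (A B : SS) := #|A| <= #|B|.
Definition sq (V : {set SS}) := sort leC (enum V).
Definition dd (V : {set SS}) := #|V|.-1.
Definition tau (V : {set SS}) (j : nat) : SS := nth set0 (sq V) j.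

Lemma size_sq V : size (sq V) = #|V|.
Proof. by rewrite size_sort cardE. Qed.
Lemma mem_sq V A : (A \in sq V) = (A \in V).
Proof. by rewrite mem_sort mem_enum. Qed.
Lemma sq_sorted V : sorted leC (sq V).
Proof. by apply: sort_sorted => A B; apply: leq_total. Qed.
Lemma sq_uniq V : uniq (sq V).
Proof. by rewrite sort_uniq enum_uniq. Qed.
Lemma dd_S V : V != set0 -> (dd V).+1 = #|V|.
Proof. by move=> V0; rewrite /dd prednK // card_gt0. Qed.

Lemma tau_in V (j : nat) : j < #|V| -> tau V j \in V.
Proof. by move=> jV; rewrite -mem_sq /tau mem_nth // size_sq. Qed.

Lemma chain_card V A B : chainset V -> A \in V -> B \in V -> #|A| <= #|B| -> A \subset B.
Proof.
move=> cV AV BV AB; case/orP: (cV A B AV BV) => // BA.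
have /eqP -> : B == A by rewrite eqEcard BA AB.
exact: subxx.
Qed.

Lemma tau_mono V (j j' : nat) : chainset V -> j <= j' -> j' < #|V| ->
  tau V j \subset tau V j'.
Proof.
move=> cV jj' j'V; have jV := leq_ltn_trans jj' j'V.
apply: chain_card cV (tau_in jV) (tau_in j'V) _.
apply: (sorted_leq_nth (leT := leC)) => //.
- by move=> a b c; apply: leq_trans.
- by move=> a; apply: leqnn.
- exact: sq_sorted.
- by rewrite inE size_sq.
- by rewrite inE size_sq.
Qed.

Definition idx (V : {set SS}) (A : SS) : nat := index A (sq V).

Lemma idx_lt V A : A \in V -> idx V A < #|V|.
Proof. by move=> AV; rewrite -size_sq index_mem mem_sq. Qed.

Lemma tau_idx V A : A \in V -> tau V (idx V A) = A.
Proof. by move=> AV; rewrite /tau /idx nth_index // mem_sq. Qed.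

Lemma idx_tau V (j : nat) : j < #|V| -> idx V (tau V j) = j.
Proof. by move=> jV; rewrite /idx /tau index_uniq ?sq_uniq ?size_sq. Qed.

Lemma idx_mono V A B : chainset V -> A \in V -> B \in V -> A \subset B -> idx V A <= idx V B.
Proof.
move=> cV AV BV AB; rewrite leqNgt; apply/negP => lt.
have := tau_mono cV (ltnW lt) (idx_lt AV); rewrite !tau_idx // => BA.
have AeB : A = B by apply/eqP; rewrite eqEsubset AB BA.
by move: lt; rewrite AeB ltnn.
Qed.

Lemma idx_inj V A B : A \in V -> B \in V -> idx V A = idx V B -> A = B.
Proof. by move=> AV BV e; rewrite -(tau_idx AV) -(tau_idx BV) e. Qed.

Lemma idx_strict V A B : chainset V -> A \in V -> B \in V -> A \proper B -> idx V A < idx V B.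
Proof.
move=> cV AV BV /andP[AB nBA]; rewrite ltn_neqAle idx_mono // andbT.
by apply/eqP => /(idx_inj AV BV) e; move: nBA; rewrite e subxx.
Qed.

End Enum.

Section Gen.
Variables (C : sSet) (n : nat).
Local Notation SS := {set 'I_n.+1}.
Implicit Types (V W : {set SS}) (A B : SS).

Definition img q (c : sd n q) : {set SS} := [set sval (sval c i) | i : 'I_q.+1].

Lemma img_sact q q' (f : dmap q' q) (c : sd n q) : img (sact (sd n) f c) \subset img c.
Proof. by apply/subsetP => A /imsetP[i _ ->]; apply/imsetP; exists (f i). Qed.

Lemma img_chain q (c : sd n q) : chainset (img c).
Proof.
move=> A B /imsetP[i _ ->] /imsetP[j _ ->].
by case: (leqP i j) => ij; [rewrite (proj2_sig c i j ij) | rewrite (proj2_sig c j i (ltnW ij)) orbT].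
Qed.

Lemma img_nz q (c : sd n q) : set0 \notin img c.
Proof. by apply/imsetP => -[i _ e]; move: (proj2_sig (sval c i)); rewrite -e eqxx. Qed.

Definition natS (S : {set SS} -> Prop) (G : forall q, sd n q -> C q) :=
  forall q q' (f : dmap q' q) (c : sd n q), S (img c) ->
    G q' (sact (sd n) f c) = sact C f (G q c).
Definition dclosed (S : {set SS} -> Prop) := forall V W, W \subset V -> S V -> S W.

Lemma setT_nz : [set: 'I_n.+1] != set0.
Proof. by apply/set0Pn; exists ord0. Qed.
Definition ne0 : NE n := exist (fun B : SS => B != set0) setT setT_nz.
Definition toNE A : NE n := insubd ne0 A.
Lemma toNE_val A : A != set0 -> sval (toNE A) = A.
Proof. by move=> A0; rewrite /toNE insubdK. Qed.

Definition okV V := [/\ chainset V, V != set0 & set0 \notin V].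

Lemma tau_nz V j : okV V -> j < #|V| -> tau V j != set0.
Proof. by case=> _ _ n0 jV; apply: contraNneq n0 => <-; apply: tau_in. Qed.

Definition chainOf V (HV : okV V) p (u : Delta (dd V) p) : sd n p.
Proof.
refine (exist _ (fun i => toNE (tau V (sval u i))) _).
move=> i j ij; have [cV V0 _] := HV.
have lt : forall l, sval u l < #|V| by move=> l; rewrite -(dd_S V0) ltn_ord.
rewrite !toNE_val ?tau_nz //; apply: tau_mono => //; exact: (proj2_sig u i j ij).
Defined.

Lemma chainOf_nat V (HV : okV V) p p' (f : dmap p' p) (u : Delta (dd V) p) :
  chainOf HV (sact (Delta (dd V)) f u) = sact (sd n) f (chainOf HV u).
Proof. by apply: sig_eqPI. Qed.

Lemma img_chainOf V (HV : okV V) p (u : Delta (dd V) p) :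
  img (chainOf HV u) = [set tau V (sval u i) | i : 'I_p.+1].
Proof.
have [_ V0 _] := HV.
apply: eq_imset => i /=; rewrite toNE_val // tau_nz //.
by rewrite -(dd_S V0) ltn_ord.
Qed.

Definition uOf V (HV : okV V) q (c : sd n q) (H : img c \subset V) : Delta (dd V) q.
Proof.
refine (exist _ (fun i => inord (idx V (sval (sval c i)))) _).
move=> i j ij /=; have [cV V0 _] := HV.
have mi : forall l, sval (sval c l) \in V by move=> l; apply: (subsetP H); apply: imset_f.
rewrite !inordK ?(dd_S V0) ?idx_lt //.
by apply: idx_mono => //; exact: (proj2_sig c i j ij).
Defined.

Lemma uOf_val V (HV : okV V) q (c : sd n q) (H : img c \subset V) i :
  (sval (uOf HV H) i : nat) = idx V (sval (sval c i)).
Proof.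
have [cV V0 _] := HV; rewrite /= inordK // (dd_S V0) idx_lt //.
by apply: (subsetP H); apply: imset_f.
Qed.

Lemma chainOf_uOf V (HV : okV V) q (c : sd n q) (H : img c \subset V) :
  chainOf HV (uOf HV H) = c.
Proof.
apply: sig_eqPI; apply: functional_extensionality => i /=.
have [cV V0 _] := HV.
have mi : sval (sval c i) \in V by apply: (subsetP H); apply: imset_f.
apply: sig_eqPI; rewrite toNE_val; last by rewrite tau_nz // -(dd_S V0) ltn_ord.
by rewrite inordK ?tau_idx // (dd_S V0) idx_lt.
Qed.

Lemma uOf_nat V (HV : okV V) q q' (f : dmap q' q) (c : sd n q) (H : img c \subset V)
   (H' : img (sact (sd n) f c) \subset V) :
  uOf HV H' = sact (Delta (dd V)) f (uOf HV H).
Proof. by apply: sig_eqPI. Qed.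

End Gen.

Section Step.
Variables (C : sSet) (n : nat) (qC : quasicategory C).
Local Notation SS := {set 'I_n.+1}.
Implicit Types (V W : {set SS}) (A B : SS).
Variables (S T : {set SS} -> Prop) (ysel : {set SS} -> SS) (G : forall q, sd n q -> C q).
Hypotheses (dS : dclosed S) (nG : natS S G).
Hypothesis Ta : forall s, T s -> okV s /\ [/\ ysel s \in s,
   (exists2 a, a \in s & a \proper ysel s) & (exists2 b, b \in s & ysel s \proper b)].
Hypothesis Tb : forall s x, T s -> x \in s -> x != ysel s -> S (s :\ x).
Hypothesis Tc : forall s, T s -> ~ S (s :\ ysel s).
Hypothesis Td : forall s s', T s -> T s' -> s <> s' -> S (s :&: s').

Definition iof s : 'I_(dd s).+1 := inord (idx s (ysel s)).

Lemma iof_val s : T s -> (iof s : nat) = idx s (ysel s).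
Proof.
move=> Ts; have [[_ s0 _] [ys _ _]] := Ta Ts.
by rewrite inordK // (dd_S s0) idx_lt.
Qed.

Lemma horn_S s (Ts : T s) p (y : horn (iof s) p) : S (img (chainOf (proj1 (Ta Ts)) (sval y))).
Proof.
case: y => u [j [ji Hj]] /=.
have [[cs s0 n0] [ys _ _]] := Ta Ts.
have js : j < #|s| by rewrite -(dd_S s0) ltn_ord.
apply: (dS (V := s :\ tau s j)); last first.
  apply: Tb => //; first exact: tau_in.
  apply/eqP => e; move: ji; rewrite /iof -e idx_tau //.
  by apply/negP; rewrite negbK; apply/eqP/val_inj; rewrite /= inordK ?(dd_S s0).
rewrite img_chainOf; apply/subsetP => A /imsetP[i _ ->].
rewrite !inE tau_in ?andbT; last by rewrite -(dd_S s0) ltn_ord.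
apply/negP => /eqP e; have := congr1 (idx s) e; rewrite !idx_tau //; last by rewrite -(dd_S s0) ltn_ord.
by move/val_inj => e'; move: (Hj i); rewrite e' eqxx.
Qed.

Definition hornmap s (Ts : T s) : sMap (horn (iof s)) C.
Proof.
refine (@SMap (horn (iof s)) C (fun p y => @G p (chainOf (proj1 (Ta Ts)) (sval y))) _).
move=> p p' f y /=; rewrite -nG; last exact: horn_S.
by rewrite -chainOf_nat.
Defined.

Lemma fill_ex s (Ts : T s) : exists h : sMap (Delta (dd s)) C, extends_horn (hornmap Ts) h.
Proof.
have [[cs s0 n0] [ys [a ai ay] [b bi yb]]] := Ta Ts.
apply: qC.
- by rewrite iof_val //; apply: leq_ltn_trans (idx_strict cs ai ys ay).
- rewrite iof_val // -ltnS (dd_S s0).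
  exact: leq_ltn_trans (idx_strict cs ys bi yb) (idx_lt bi).
Qed.

Definition fill s (Ts : T s) : sMap (Delta (dd s)) C :=
  proj1_sig (constructive_indefinite_description _ (fill_ex Ts)).
Lemma fill_ext s (Ts : T s) : extends_horn (hornmap Ts) (fill Ts).
Proof. exact: (proj2_sig (constructive_indefinite_description _ (fill_ex Ts))). Qed.

Definition pr1 (P1 P2 : Prop) (H : P1 /\ P2) : P1 := match H with conj a _ => a end.
Definition pr2 (P1 P2 : Prop) (H : P1 /\ P2) : P2 := match H with conj _ b => b end.

Definition G' q (c : sd n q) : C q :=
  match excluded_middle_informative (S (img c)) with
  | left _ => @G q c
  | right _ =>
    match excluded_middle_informative (exists s, T s /\ img c \subset s) with
    | left e => let w := constructive_indefinite_description _ e in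
                fill (pr1 (proj2_sig w)) q (uOf (proj1 (Ta (pr1 (proj2_sig w)))) (pr2 (proj2_sig w)))
    | right _ => @G q c
    end
  end.

Lemma G'_S q (c : sd n q) : S (img c) -> G' c = @G q c.
Proof. by rewrite /G'; case: excluded_middle_informative. Qed.

Lemma G'_T q (c : sd n q) s (Ts : T s) (H : img c \subset s) : ~ S (img c) ->
  G' c = fill Ts q (uOf (proj1 (Ta Ts)) H).
Proof.
move=> nS; rewrite /G'; case: excluded_middle_informative => // _.
case: excluded_middle_informative => [e|ne]; last by exfalso; apply: ne; exists s.
case: (constructive_indefinite_description _ e) => s0 [H0 H0'] /=.
have es : s0 = s.
  apply: NNPP => ne; apply: nS; apply: dS (Td H0 Ts ne).
  by rewrite subsetI H0' H.
move: H0 H0'; rewrite es => H0 H0' /=; by rewrite (proof_irrelevance _ H0 Ts) (proof_irrelevance _ H0' H).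
Qed.

Theorem ext_step_main :
  natS (fun V => S V \/ exists s, T s /\ V \subset s) G' /\
  forall q (c : sd n q), S (img c) -> G' c = @G q c.
Proof.
split; last exact: G'_S.
move=> q q' f c [Sc|[s [Ts cs]]].
  by rewrite !G'_S //; [apply: nG | apply: dS (img_sact f c) Sc].
have [Sc|nSc] := classic (S (img c)).
  by rewrite !G'_S //; [apply: nG | apply: dS (img_sact f c) Sc].
have cs' := subset_trans (img_sact f c) cs.
rewrite (G'_T Ts cs nSc).
have [Sc'|nSc'] := classic (S (img (sact (sd n) f c))); last first.
  by rewrite (G'_T Ts cs' nSc') (uOf_nat _ cs cs') snat.
rewrite G'_S // -(chainOf_uOf (proj1 (Ta Ts)) cs') (uOf_nat _ cs cs').
set u := sact _ f _.
have hu : hornP (iof s) u.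
  apply: NNPP => nh; apply: (Tc Ts); apply: dS Sc'.
  apply/subsetP => x; rewrite !inE => /andP[xy xs].
  have [[cS s0 n0] [ys _ _]] := Ta Ts.
  have xl : idx s x < (dd s).+1 by rewrite (dd_S s0) idx_lt.
  have [l ul] : exists l, sval u l = Ordinal xl.
    apply: NNPP => nl; apply: nh; exists (Ordinal xl); split.
      apply/eqP => /(congr1 val) /=; rewrite iof_val // => /(idx_inj xs ys) e.
      by move: xy; rewrite e eqxx.
    by move=> l; apply/eqP => e; apply: nl; exists l.
  rewrite -(chainOf_uOf (proj1 (Ta Ts)) cs') img_chainOf; apply/imsetP; exists l => //.
  rewrite (uOf_nat _ cs cs') -/u ul /= tau_idx //.
have -> : u = sval (exist (fun c => hornP (iof s) c) u hu) by [].
transitivity (hornmap Ts q' (exist _ u hu)); first by []. by rewrite -fill_ext /= /u snat.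
Qed.
End Step.

Theorem ext_step (C : sSet) (n : nat) (qC : quasicategory C)
  (S T : {set {set 'I_n.+1}} -> Prop) (ysel : {set {set 'I_n.+1}} -> {set 'I_n.+1})
  (G : forall q, sd n q -> C q) :
  dclosed S -> natS S G ->
  (forall s, T s -> okV s /\ [/\ ysel s \in s,
   (exists2 a, a \in s & a \proper ysel s) & (exists2 b, b \in s & ysel s \proper b)]) ->
  (forall s x, T s -> x \in s -> x != ysel s -> S (s :\ x)) ->
  (forall s, T s -> ~ S (s :\ ysel s)) ->
  (forall s s', T s -> T s' -> s <> s' -> S (s :&: s')) ->
  exists G' : forall q, sd n q -> C q,
    natS (fun V => S V \/ exists s, T s /\ V \subset s) G' /\
    forall q (c : sd n q), S (img c) -> G' q c = G q c.
Proof.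
move=> dS nG Ta Tb Tc Td.
by eexists; apply: (ext_step_main qC dS nG Ta Tb Tc Td).
Qed.

Section Comb.
Variables (n : nat) (k : 'I_n.+1).
Local Notation SS := {set 'I_n.+1}.
Implicit Types (V W : {set SS}) (A B : SS).

Definition Dk : SS := [set~ k].
Definition okD V := [/\ chainset V, set0 \notin V & Dk \notin V].
Definition bads V := [set A in V | k \notin A].
Definition bmax V : SS := \bigcup_(A in bads V) A.
Definition ysel V : SS := k |: bmax V.

Lemma chainset_sub V W : W \subset V -> chainset V -> chainset W.
Proof. by move=> WV cV A B AW BW; apply: cV; apply: (subsetP WV). Qed.

Lemma okD_sub V W : W \subset V -> okD V -> okD W.
Proof.
move=> WV [cV n0 nD]; split; first exact: chainset_sub cV.
- by apply: contra n0; apply: (subsetP WV).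
- by apply: contra nD; apply: (subsetP WV).
Qed.

Lemma bmax_char V A : A \in bads V -> (forall B, B \in bads V -> B \subset A) -> bmax V = A.
Proof.
move=> Ab H; apply/eqP; rewrite eqEsubset; apply/andP; split.
  by apply/bigcupsP.
exact: bigcup_sup.
Qed.

Lemma bmax_ex V : chainset V -> bads V != set0 ->
  exists2 A, A \in bads V & forall B, B \in bads V -> B \subset A.
Proof.
move=> cV /set0Pn[A0 A0b].
case: (@arg_maxnP _ A0 (fun A => A \in bads V) (fun A => #|A|) A0b) => A Ab H.
exists A => // B Bb; move: (Ab) (Bb); rewrite !inE => /andP[AV _] /andP[BV _].
exact: chain_card cV BV AV (H B Bb).
Qed.

Lemma bmax_bad V : chainset V -> bads V != set0 -> bmax V \in bads V.
Proof. by move=> cV b0; case: (bmax_ex cV b0) => A Ab H; rewrite (bmax_char Ab H). Qed.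

Lemma bad_sub V B : B \in bads V -> B \subset bmax V.
Proof. by move=> Bb; apply: bigcup_sup. Qed.

Lemma good_sup V A : chainset V -> A \in V -> k \in A -> ysel V \subset A.
Proof.
move=> cV AV kA; rewrite /ysel subUset sub1set kA /=.
apply/bigcupsP => B; rewrite inE => /andP[BV kB].
case/orP: (cV A B AV BV) => // AB.
by move: kB; rewrite (subsetP AB _ kA).
Qed.

Lemma bads_U1 V (Y : SS) : k \in Y -> bads (Y |: V) = bads V.
Proof.
move=> kY; apply/setP => A; rewrite !inE.
by case: (A =P Y) => [->|]; rewrite ?kY ?andbF.
Qed.

Lemma bads_D1 V (x : SS) : bads (V :\ x) = bads V :\ x.
Proof. by apply/setP => A; rewrite !inE andbA. Qed.

Lemma bads_sub V : bads V \subset V.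
Proof. by apply/subsetP => A; rewrite inE => /andP[]. Qed.

Lemma ysel_bads V W : bads V = bads W -> ysel V = ysel W.
Proof. by rewrite /ysel /bmax => ->. Qed.

Lemma k_ysel V : k \in ysel V.
Proof. exact: setU11. Qed.

Lemma bmax_nk V : k \notin bmax V.
Proof. by apply/bigcupP => -[A]; rewrite inE => /andP[_ /negbTE ->]. Qed.

Lemma ysel_ne_D V : ysel V != Dk.
Proof. by apply/eqP => e; move: (k_ysel V); rewrite e !inE eqxx. Qed.

Lemma ysel_ne_T V : bmax V \in V -> Dk \notin V -> ysel V != setT.
Proof.
move=> bV nD; apply/eqP => e; have eb : bmax V = Dk.
  apply/setP => x; rewrite !inE; case: (x =P k) => [->|/eqP xk]; first by rewrite (negbTE (bmax_nk V)).
  by have := in_setT x; rewrite -e !inE (negbTE xk).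
by move: nD; rewrite -eb bV.
Qed.

End Comb.

Section Filt.
Variables (n : nat) (k : 'I_n.+1).
Local Notation SS := {set 'I_n.+1}.
Implicit Types (V W : {set SS}) (A B : SS).
Local Notation bads := (bads k).
Local Notation bmax := (bmax k).
Local Notation ysel := (ysel k).
Local Notation okD := (okD k).
Local Notation Dk := (Dk k).

Definition S0 V := okD V /\ (setT \notin V \/ forall A, A \in V -> k \in A).
Definition typeI V := [/\ okD V, setT \in V, bads V != set0 & ysel V \notin V].
Definition Mb := #|{set 'I_n.+1}|.+1.
Definition mu V := #|V| * Mb + #|bads V|.
Definition St t V := S0 V \/ exists tau, typeI tau /\ mu tau < t /\ V \subset ysel tau |: tau.
Definition Tt t s := exists tau, typeI tau /\ mu tau = t /\ s = ysel tau |: tau.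

Lemma card_ltM V : #|V| < Mb.
Proof. by rewrite ltnS max_card. Qed.
Lemma bads_ltM V : #|bads V| < Mb.
Proof. exact: card_ltM. Qed.

Lemma S0_dc : dclosed S0.
Proof.
move=> V W WV [oV H]; split; first exact: okD_sub oV.
case: H => [nT|H].
  by left; apply: contra nT; apply: (subsetP WV).
by right=> A AW; apply: H; apply: (subsetP WV).
Qed.

Lemma St_dc t : dclosed (St t).
Proof.
move=> V W WV [H|[tau [H1 [H2 H3]]]]; first by left; apply: S0_dc H.
by right; exists tau; split => //; split => //; apply: subset_trans H3.
Qed.

Section TI.
Variable tau : {set SS}.
Hypothesis tI : typeI tau.
Local Notation b := (bmax tau).
Local Notation y := (ysel tau).

Lemma tI_ok : okD tau. Proof. by case: tI. Qed.
Lemma tI_chain : chainset tau. Proof. by case: tI_ok. Qed.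
Lemma tI_bb : b \in bads tau. Proof. by case: tI => _ _ b0 _; apply: bmax_bad tI_chain b0. Qed.
Lemma tI_b : b \in tau. Proof. by move: tI_bb; rewrite inE => /andP[]. Qed.
Lemma tI_kb : k \notin b. Proof. exact: bmax_nk. Qed.
Lemma tI_ny : y \notin tau. Proof. by case: tI. Qed.
Lemma tI_T : setT \in tau. Proof. by case: tI. Qed.
Lemma tI_by : b \proper y.
Proof.
rewrite properE subsetUr /=; apply/negP => /subsetP H.
by move: (H k (setU11 _ _)); rewrite (negbTE tI_kb).
Qed.
Lemma tI_yT : y \proper setT.
Proof.
rewrite properE subsetT /=; apply/negP => H.
have : y == setT by rewrite eqEsubset subsetT.
by rewrite (negbTE (ysel_ne_T tI_b _)) //; case: tI_ok.
Qed.
Lemma tI_good A : A \in tau -> k \in A -> y \subset A.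
Proof. by move=> AV kA; apply: good_sup tI_chain AV kA. Qed.
Lemma tI_bad A : A \in tau -> k \notin A -> A \subset b.
Proof. by move=> AV kA; apply: bad_sub; rewrite inE AV. Qed.

Lemma tI_sig_chain : chainset (y |: tau).
Proof.
have cy : forall B, B \in tau -> (y \subset B) || (B \subset y).
  move=> B BV; case kB: (k \in B); first by rewrite tI_good.
  by rewrite (subset_trans (tI_bad BV (negbT kB)) (proper_sub tI_by)) orbT.
move=> A B; rewrite !inE => /orP[/eqP->|AV] /orP[/eqP->|BV].
- by rewrite subxx.
- exact: cy.
- by rewrite orbC; apply: cy.
- exact: tI_chain.
Qed.

Lemma tI_sig_ok : okD (y |: tau).
Proof.
have [_ n0 nD] := tI_ok; split; first exact: tI_sig_chain.
- rewrite !inE negb_or n0 andbT; apply/eqP => e.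
  by move: (k_ysel k tau); rewrite -e inE.
- by rewrite !inE negb_or nD andbT eq_sym ysel_ne_D.
Qed.

Lemma tI_sig_bads : bads (y |: tau) = bads tau.
Proof. by apply: bads_U1; apply: k_ysel. Qed.

Lemma tI_sig_y : ysel (y |: tau) = y.
Proof. by apply: ysel_bads; apply: tI_sig_bads. Qed.

End TI.

Lemma mu_div a b : b < Mb -> (a * Mb + b) %/ Mb = a /\ (a * Mb + b) %% Mb = b.
Proof.
move=> bM; have M0 : 0 < Mb by [].
by rewrite divnMDl // divn_small // addn0 modnMDl modn_small.
Qed.

Lemma mu_eq V W : mu V = mu W -> #|V| = #|W| /\ #|bads V| = #|bads W|.
Proof.
rewrite /mu => e.
have [h1 h2] := mu_div #|V| (bads_ltM V); have [h3 h4] := mu_div #|W| (bads_ltM W).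
by rewrite -h1 -h3 e -{1}h2 -h4 e.
Qed.

Lemma mu_lt V W : mu V < mu W -> #|V| <= #|W| /\ (#|V| = #|W| -> #|bads V| < #|bads W|).
Proof.
rewrite /mu => lt; have := bads_ltM V; have := bads_ltM W.
split; first by nia.
move=> e; rewrite e in lt; lia.
Qed.
End Filt.

Section Filt2.
Variables (n : nat) (k : 'I_n.+1).
Local Notation SS := {set 'I_n.+1}.
Implicit Types (V W : {set SS}) (A B : SS).
Local Notation bads := (bads k).
Local Notation bmax := (bmax k).
Local Notation ysel := (ysel k).
Local Notation okD := (okD k).
Local Notation St := (St k).
Local Notation Tt := (Tt k).
Local Notation S0 := (S0 k).
Local Notation typeI := (typeI k).
Local Notation mu := (mu k).
Local Notation Mb := (Mb n).

Lemma bads_mono V W : V \subset W -> bads V \subset bads W.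
Proof. by move=> VW; apply/subsetP => A; rewrite !inE => /andP[AV ->]; rewrite (subsetP VW). Qed.

Lemma setD1U1' (y x : SS) V : x != y -> (y |: V) :\ x = y |: (V :\ x).
Proof.
move=> xy; apply/setP => A; rewrite !inE; case: (A =P x) => [->|_] //=.
by rewrite (negbTE xy).
Qed.

Lemma arith1 a b c M : b < M -> a * M + b < (1 + a) * M + c.
Proof. nia. Qed.
Lemma arith2 x b : x + b < x + (1 + b).
Proof. lia. Qed.

Lemma Tt_faces t s x : Tt t s -> x \in s -> x != ysel s -> St t (s :\ x).
Proof.
case=> tau [tI [mt ->]]; rewrite tI_sig_y // => xs xy.
have xt : x \in tau by move: xs; rewrite !inE (negbTE xy).
have ok := tI_sig_ok tI.
rewrite setD1U1' //.
have okx : okD (ysel tau |: (tau :\ x)) by rewrite -setD1U1' //; apply: okD_sub ok; apply: subD1set.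
have cM := card_ltM (tau :\ x); have bM := bads_ltM k (tau :\ x).
have cx := cardsD1 x tau; rewrite xt /= in cx.
case: (x =P setT) => [xT|/eqP xT].
  left; split => //; left; rewrite !inE negb_or xT eqxx andbT.
  by apply/eqP => e; have := tI_yT tI; rewrite -e properxx.
case: (x =P bmax tau) => [xb|/eqP xb]; last first.
  right; exists (tau :\ x).
  have bm : bmax (tau :\ x) = bmax tau.
    apply: bmax_char; first by rewrite bads_D1 in_setD1 (tI_bb tI) andbT eq_sym.
    by move=> B; rewrite bads_D1 => /setD1P[_ Bb]; apply: bad_sub.
  have ey : ysel (tau :\ x) = ysel tau by apply: (congr1 (fun B => k |: B) bm).
  split; first split.
  - by apply: okD_sub (tI_ok tI); apply: subD1set.
  - by rewrite !inE (tI_T tI) andbT eq_sym.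
  - by apply/set0Pn; exists (bmax tau); rewrite bads_D1 in_setD1 (tI_bb tI) andbT eq_sym.
  - by rewrite ey !inE (negbTE (tI_ny tI)) andbF.
  split; last by rewrite ey.
  rewrite -mt /mu cx; apply: arith1; exact: bads_ltM.
have bb := tI_bb tI.
case: (bads (tau :\ x) =P set0) => [b0|/eqP b0].
  left; split => //; right => A; rewrite !inE => /orP[/eqP->|/andP[Ab At]]; first exact: k_ysel.
  apply: contraT => kA; have : A \in bads (tau :\ x) by rewrite bads_D1 in_setD1 Ab inE At kA.
  by rewrite b0 inE.
have sub' : bmax (tau :\ x) \subset bmax tau.
  by apply/bigcupsP => B; rewrite bads_D1 => /setD1P[_ Bb]; apply: bad_sub.
have cb := cardsD1 (bmax tau) (bads tau); rewrite bb -xb -bads_D1 /= in cb.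
case: (ysel (tau :\ x) =P ysel tau) => [ey|/eqP ey].
  right; exists (tau :\ x); split; first split.
  - by apply: okD_sub (tI_ok tI); apply: subD1set.
  - by rewrite !inE (tI_T tI) andbT eq_sym.
  - exact: b0.
  - by rewrite ey !inE (negbTE (tI_ny tI)) andbF.
  split; last by rewrite ey.
  rewrite -mt /mu cx; apply: arith1; exact: bads_ltM.
right; exists (ysel tau |: (tau :\ x)).
have bU : bads (ysel tau |: (tau :\ x)) = bads (tau :\ x) by apply: bads_U1; apply: k_ysel.
have yU : ysel (ysel tau |: (tau :\ x)) = ysel (tau :\ x) by apply: ysel_bads.
have nyt : ysel tau \notin tau :\ x by rewrite !inE (negbTE (tI_ny tI)) andbF.
split; first split.
- exact: okx.
- by rewrite !inE (tI_T tI) andbT; apply/orP; right; rewrite eq_sym.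
- by rewrite bU.
- rewrite yU !inE negb_or ey /=; apply/negP => /andP[_ yt].
  have h1 := tI_good tI yt (k_ysel _ _).
  have h2 : ysel (tau :\ x) \subset ysel tau by apply: setUS; exact: sub'.
  by move: ey; rewrite eq_sym eqEsubset h1 h2.
split; last by rewrite yU subsetUr.
rewrite -mt /mu bU cardsU1 nyt cx cb; exact: arith2.
Qed.

Lemma Tt_c t s : Tt t s -> ~ St t (s :\ ysel s).
Proof.
case=> tau [tI [mt ->]]; rewrite tI_sig_y // setU1K ?tI_ny //.
case=> [[_ [nT|allg]]|[tau' [tI' [lt sub]]]].
- by move: nT; rewrite (tI_T tI).
- by move: (allg _ (tI_b tI)); rewrite (negbTE (tI_kb k tau)).
have bsub : #|bads tau| <= #|bads tau'|.
  by rewrite -(tI_sig_bads k tau'); apply: subset_leq_card; apply: bads_mono.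
have csub : #|tau| <= #|ysel tau' |: tau'| by apply: subset_leq_card.
rewrite cardsU1 (tI_ny tI') in csub.
rewrite -mt in lt; have [l1 l2] := mu_lt lt.
case: (#|tau'| =P #|tau|) => [e|ne]; first by have := l2 e; lia.
have e : tau = ysel tau' |: tau'.
  apply/eqP; rewrite eqEcard sub cardsU1 (tI_ny tI'); lia.
have yy : ysel tau = ysel tau' by rewrite {1}e; apply: (tI_sig_y k tau').
by have := tI_ny tI; rewrite yy e !inE eqxx.
Qed.

Lemma Tt_d t s s' : Tt t s -> Tt t s' -> s <> s' -> St t (s :&: s').
Proof.
move=> Ts Ts' ne.
case: (Ts) => tau [tI [mt es]]; case: (Ts') => tau' [tI' [mt' es']].
have [ec eb] : #|tau| = #|tau'| /\ #|bads tau| = #|bads tau'| by apply: mu_eq; rewrite mt mt'.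
have ys : ysel s = ysel tau by rewrite es tI_sig_y.
have ys' : ysel s' = ysel tau' by rewrite es' tI_sig_y.
have nss : ~~ (s \subset s').
  apply/negP => ss; apply: ne; apply/eqP; rewrite eqEcard ss es es' !cardsU1 (tI_ny tI) (tI_ny tI') ec.
  exact: leqnn.
case/subsetPn: nss => x xs xs'.
case: (x =P ysel s) => [xy|/eqP xy]; last first.
  apply: St_dc (Tt_faces Ts xs xy); apply/subsetP => A; rewrite !inE => /andP[As As'].
  by rewrite As andbT; apply: contraNneq xs' => <-.
have nts : ~~ (tau \subset s').
  apply/negP => ts.
  have bs : bads tau \subset bads tau' by rewrite -(tI_sig_bads k tau') -es'; apply: bads_mono.
  have be : bads tau = bads tau' by apply/eqP; rewrite eqEcard bs eb leqnn.
  have := xs'; rewrite xy ys (ysel_bads be) es' !inE eqxx //.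
case/subsetPn: nts => z zt zs'.
have zs : z \in s by rewrite es !inE zt orbT.
have zy : z != ysel s.
  by rewrite ys; apply: contraTneq zt => ->; apply: tI_ny.
apply: St_dc (Tt_faces Ts zs zy); apply/subsetP => A; rewrite !inE => /andP[As As'].
by rewrite As andbT; apply: contraNneq zs' => <-.
Qed.

Lemma St_step t V : St t.+1 V -> St t V \/ exists s, Tt t s /\ V \subset s.
Proof.
case=> [H|[tau [tI [lt sub]]]]; first by left; left.
case: (ltngtP (mu tau) t) => [lt'| |e].
- by left; right; exists tau.
- by move=> gt; move: lt; rewrite ltnS leqNgt gt.
- by right; exists (ysel tau |: tau); split => //; exists tau.
Qed.

Lemma St_all V : okD V -> St (Mb * Mb) V.
Proof.
move=> oV; have [cV n0 nD] := oV.
case: (classic (S0 V)) => [H|nS]; first by left.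
have TV : setT \in V by apply: NNPP => nT; apply: nS; split => //; left; apply/negP.
have b0 : bads V != set0.
  apply/set0Pn; apply: NNPP => nb; apply: nS; split => //; right => A AV.
  by apply: NNPP => kA; apply: nb; exists A; rewrite inE AV /=; apply/negP.
have bV : bmax V \in V by move: (bmax_bad cV b0); rewrite inE => /andP[].
have mub : forall tau, mu tau < Mb * Mb.
  by move=> tau; rewrite /mu; have := card_ltM tau; have := bads_ltM k tau; nia.
right; case yV: (ysel V \in V).
  exists (V :\ ysel V).
  have bD : bads (V :\ ysel V) = bads V.
    rewrite bads_D1; apply/setP => A; rewrite !inE; case: (A =P ysel V) => [->|] //=.
    by rewrite k_ysel andbF.
  have yD : ysel (V :\ ysel V) = ysel V by apply: ysel_bads.
  split; first split.
  - by apply: okD_sub oV; apply: subD1set.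
  - by rewrite !inE TV andbT eq_sym ysel_ne_T.
  - by rewrite bD.
  - by rewrite yD !inE eqxx.
  by split => //; rewrite yD setD1K.
exists V; split; first by split => //; rewrite yV.
by split => //; apply: subsetUr.
Qed.

End Filt2.

Lemma natS_imp (C : sSet) n (S S' : {set {set 'I_n.+1}} -> Prop) (G : forall q, sd n q -> C q) :
  natS S G -> (forall V, S' V -> S V) -> natS S' G.
Proof. by move=> nG H q q' f c Sc; apply: nG; apply: H. Qed.

Section Fin.
Variables (C : sSet) (qC : quasicategory C) (n : nat) (k : 'I_n.+1).
Local Notation SS := {set 'I_n.+1}.
Implicit Types (A B : SS).

Lemma filt (G0 : forall q, sd n q -> C q) : natS (S0 k) G0 -> forall t,
  exists G : forall q, sd n q -> C q, natS (St k t) G /\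
     forall q (c : sd n q), S0 k (img c) -> G q c = G0 q c.
Proof.
move=> nG0; elim=> [|t [Gt [nGt eGt]]].
  exists G0; split => //; apply: (natS_imp nG0) => V [//|[tau [_ [lt _]]]] //.
have Ta : forall s, Tt k t s -> okV s /\ [/\ ysel k s \in s,
   (exists2 a, a \in s & a \proper ysel k s) & (exists2 b, b \in s & ysel k s \proper b)].
  move=> s [tau [tI [mt ->]]]; rewrite tI_sig_y.
  have [c0 n0 _] := tI_sig_ok tI.
  split; first by split => //; apply/set0Pn; exists (ysel k tau); rewrite setU11.
  split; first by rewrite setU11.
  - by exists (bmax k tau); [rewrite !inE (tI_b tI) orbT | apply: tI_by].
  - by exists setT; [rewrite !inE (tI_T tI) orbT | apply: tI_yT].
have [G' [nG' eG']] := ext_step qC (@St_dc n k t) nGt Ta (@Tt_faces n k t) (@Tt_c n k t) (@Tt_d n k t).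
exists G'; split.
  apply: (natS_imp nG') => V HV; exact: St_step HV.
by move=> q c Sc; rewrite eG' ?eGt //; left.
Qed.

Definition col (A : SS) : SS := if A == Dk k then setT else A.

Lemma col_nz A : A != set0 -> col A != set0.
Proof. by rewrite /col; case: ifP => // _ _; apply: setT_nz. Qed.

Lemma col_mono A B : A \subset B -> col A \subset col B.
Proof.
rewrite /col; case: ifP => [/eqP ->|_]; case: ifP => [_|/eqP nB] => AB //; try exact: subsetT.
apply/subsetP => x _.
case: (x =P k) => [->|/eqP xk]; last by apply: (subsetP AB); rewrite !inE.
apply: NNPP => kB0; have kB : k \notin B by apply/negP.
apply: nB; apply/setP => y; rewrite !inE.
case: (y =P k) => [->|/eqP yk]; first by rewrite (negbTE kB).
by rewrite (subsetP AB) // !inE.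
Qed.

Lemma col_nD A : col A != Dk k.
Proof.
rewrite /col; case: ifP => [_|/negbT //]; apply/eqP => /setP /(_ k).
by rewrite !inE eqxx.
Qed.

Definition colc q (c : sd n q) : sd n q.
Proof.
refine (exist _ (fun i => toNE (col (sval (sval c i)))) _).
move=> i j ij; rewrite !toNE_val; try apply: col_nz; try exact: (proj2_sig (sval c _)).
by apply: col_mono; exact: (proj2_sig c i j ij).
Defined.

Lemma colc_nat q q' (f : dmap q' q) (c : sd n q) : colc (sact (sd n) f c) = sact (sd n) f (colc c).
Proof. by apply: sig_eqPI. Qed.

Lemma img_colc q (c : sd n q) : img (colc c) = col @: img c.
Proof.
rewrite /img -imset_comp; apply: eq_imset => i /=.
by rewrite toNE_val //; apply: col_nz; exact: (proj2_sig (sval c i)).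
Qed.

Lemma okD_colc q (c : sd n q) : okD k (img (colc c)).
Proof.
split; [exact: img_chain | exact: img_nz |].
by rewrite img_colc; apply/imsetP => -[A _ e]; move: (col_nD A); rewrite -e eqxx.
Qed.

Lemma colc_id q (c : sd n q) : Dk k \notin img c -> colc c = c.
Proof.
move=> nD; apply: sig_eqPI; apply: functional_extensionality => i /=.
have ne : sval (sval c i) != Dk k by apply: contraNneq nD => <-; apply: imset_f.
apply: sig_eqPI; rewrite toNE_val /col (negbTE ne) //.
exact: (proj2_sig (sval c i)).
Qed.

Theorem extend_S0 (G0 : forall q, sd n q -> C q) : natS (S0 k) G0 ->
  exists G : sMap (sd n) C, forall q (c : sd n q), S0 k (img c) -> G q c = G0 q c.
Proof.
move=> nG0; have [Gf [nGf eGf]] := filt nG0 (Mb n * Mb n).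
pose G := @SMap (sd n) C (fun q c => Gf q (colc c)) (fun m p f c =>
   etrans (f_equal (Gf m) (colc_nat f c)) (nGf p m f (colc c) (St_all (okD_colc c)))).
exists G => q c Sc /=.
have [[_ _ nD] _] := Sc.
by rewrite colc_id // eGf.
Qed.
End Fin.

Definition goodP n (k : 'I_n.+1) (V : {set {set 'I_n.+1}}) := forall A, A \in V -> k \in A.
Definition pgoodP n (k : 'I_n.+1) (V : {set {set 'I_n.+1}}) := setT \notin V /\ goodP k V.

Definition cocone_prop (C : sSet) n (k : 'I_n.+1) := forall F : forall q, sd n q -> C q,
  natS (pgoodP k) F -> exists K : forall q, sd n q -> C q, natS (goodP k) K /\
   forall q (c : sd n q), pgoodP k (img c) -> K q c = F q c.

Section CPos.
Variables (C : sSet) (n : nat) (k : 'I_n.+1).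
Hypothesis hC : forall g : msMap (LJ k) (sharp C), exists h : msMap (L k) (sharp C),
    forall p (y : LJ k p), h p (sval y) = g p y.

Definition sdToL q (c : sd n q) : Lnerve k q.
Proof.
refine (exist _ (fun i => exist (fun A : {set 'I_n.+1} => k \in A) (k |: sval (sval c i)) (setU11 _ _)) _).
by move=> i j ij /=; apply: setUS; exact: (proj2_sig c i j ij).
Defined.

Lemma sdToL_nat q q' (f : dmap q' q) (c : sd n q) : sdToL (sact (sd n) f c) = sact (Lnerve k) f (sdToL c).
Proof. by apply: sig_eqPI. Qed.

Lemma img_LtoSd q (x : Lnerve k q) : img (LtoSd x) = [set sval (sval x i) | i : 'I_q.+1].
Proof. by []. Qed.

Lemma cocone_pos : cocone_prop C k.
Proof.
move=> F nF.
have Hg : forall q (x : LJ k q), pgoodP k (img (LtoSd (sval x))).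
  move=> q x; split.
    apply/imsetP => -[i _ e].
    have e' : sval (sval (sval x) i) = setT by exact: (esym e).
    by move: (proj2_sig x i); rewrite /= e' eqxx.
  by move=> A /imsetP[i _ ->]; exact: (proj2_sig (sval (sval x) i)).
pose g0 := @SMap (LJ k) C (fun q x => F q (LtoSd (sval x)))
   (fun m p f x => etrans (f_equal (F m) (LtoSd_nat f (sval x))) (nF p m f _ (Hg p x))).
have [h Hh] := hC (@MSMap (LJ k) (sharp C) g0 (fun _ _ => I)).
exists (fun q c => h q (sdToL c)); split.
  by move=> q q' f c _; rewrite sdToL_nat snat.
move=> q c [nT gd].
have lj : LJP (sdToL c).
  move=> i /=; have ci : sval (sval c i) \in img c by apply: imset_f.
  rewrite (setUidPr _); last by rewrite sub1set gd.
  by apply: contraNneq nT => <-.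
have -> : sdToL c = sval (exist (fun x => LJP x) (sdToL c) lj : LJ k q) by [].
rewrite Hh /=; congr (F q _); apply: sig_eqPI; apply: functional_extensionality => i.
apply: sig_eqPI => /=; apply/setUidPr; rewrite sub1set; apply: gd; exact: imset_f.
Qed.
End CPos.

Section Swap.
Variables (n : nat) (a b : 'I_n.+1).
Local Notation SS := {set 'I_n.+1}.
Implicit Types (A B : SS).

Definition sw (x : 'I_n.+1) := if x == a then b else if x == b then a else x.
Lemma sw_inv : cancel sw sw.
Proof.
move=> x; rewrite /sw.
have [->|xa] := eqVneq x a.
  rewrite eqxx; have [->|ba] := eqVneq b a; first by rewrite ?eqxx.
  by rewrite ?(negbTE ba) ?eqxx.
have [->|xb] := eqVneq x b.
  by rewrite ?eqxx ?(negbTE xa) 1?eq_sym ?(negbTE xa) ?eqxx.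
by rewrite ?(negbTE xa) ?(negbTE xb).
Qed.
Lemma sw_a : sw a = b. Proof. by rewrite /sw eqxx. Qed.
Lemma sw_inj : injective sw. Proof. exact: can_inj sw_inv. Qed.
Lemma mem_sw x A : (sw x \in sw @: A) = (x \in A).
Proof. exact: mem_imset sw_inj. Qed.
Lemma sw_sw A : sw @: (sw @: A) = A.
Proof. by rewrite -imset_comp -[RHS]imset_id; apply: eq_imset => x /=; rewrite sw_inv. Qed.
Lemma sw_T A : (sw @: A == setT) = (A == setT).
Proof.
apply/eqP/eqP => [e|->]; last first.
  by apply/setP => x; rewrite inE -(sw_inv x) mem_sw inE.
by rewrite -(sw_sw A) e; apply/setP => x; rewrite inE -(sw_inv x) mem_sw inE.
Qed.
Lemma sw_nz A : A != set0 -> sw @: A != set0.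
Proof. by case/set0Pn => x xA; apply/set0Pn; exists (sw x); rewrite mem_sw. Qed.

Definition rc q (c : sd n q) : sd n q.
Proof.
refine (exist _ (fun i => exist (fun B : SS => B != set0) (sw @: sval (sval c i)) (sw_nz (proj2_sig (sval c i)))) _).
by move=> i j ij /=; apply: imsetS; exact: (proj2_sig c i j ij).
Defined.

Lemma rc_nat q q' (f : dmap q' q) (c : sd n q) : rc (sact (sd n) f c) = sact (sd n) f (rc c).
Proof. by apply: sig_eqPI. Qed.

Lemma rc_rc q (c : sd n q) : rc (rc c) = c.
Proof.
apply: sig_eqPI; apply: functional_extensionality => i; apply: sig_eqPI => /=.
exact: sw_sw.
Qed.

Lemma img_rc q (c : sd n q) : img (rc c) = (fun A => sw @: A) @: img c.
Proof. by rewrite /img -imset_comp. Qed.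

Lemma good_rc q (c : sd n q) : goodP a (img c) -> goodP b (img (rc c)).
Proof. by move=> H A; rewrite img_rc => /imsetP[B BV ->]; rewrite -sw_a mem_sw H. Qed.
Lemma pgood_rc q (c : sd n q) : pgoodP a (img c) -> pgoodP b (img (rc c)).
Proof.
case=> nT gd; split; last exact: good_rc.
rewrite img_rc; apply/imsetP => -[B BV /esym/eqP]; rewrite sw_T => /eqP e.
by move: nT; rewrite -e BV.
Qed.
End Swap.

Lemma sw_b n (a b : 'I_n.+1) : sw a b b = a.
Proof. by rewrite /sw eqxx; have [->|] := eqVneq b a. Qed.

Lemma rc_sym n (a b : 'I_n.+1) q (c : sd n q) : rc b a c = rc a b c.
Proof.
apply: sig_eqPI; apply: functional_extensionality => i; apply: sig_eqPI => /=.
apply: eq_imset => x /=; rewrite /sw.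
have [->|xb] := eqVneq x b; last by [].
by have [->|] := eqVneq b a.
Qed.

Lemma cocone_swap (C : sSet) n (a b : 'I_n.+1) : cocone_prop C b -> cocone_prop C a.
Proof.
move=> Pb F nF.
have nF1 : natS (pgoodP b) (fun q c => F q (rc a b c)).
  move=> q q' f c pc /=; rewrite rc_nat nF //.
  by rewrite -rc_sym; apply: pgood_rc.
have [K1 [nK1 eK1]] := Pb _ nF1.
exists (fun q c => K1 q (rc a b c)); split.
  by move=> q q' f c gc /=; rewrite rc_nat nK1 //; apply: good_rc.
move=> q c pc /=; rewrite eK1 ?rc_rc //; exact: pgood_rc.
Qed.

Section One.
Variables (C : sSet) (n : nat) (n0 : 0 < n) (n1 : n <= 1) (k : 'I_n.+1).

Lemma single (A : {set 'I_n.+1}) : k \in A -> A != setT -> A = [set k].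
Proof.
move=> kA AT; apply/setP => x; rewrite inE.
have [->|xk] := eqVneq x k; first by rewrite kA.
apply/negbTE/negP => xA; apply: (negP AT); apply/eqP/setP => y; rewrite inE.
have xk' : (x : nat) <> k by move=> e; move/eqP: xk; apply; apply: val_inj.
have : (y : nat) = k \/ (y : nat) = x.
  by have := ltn_ord y; have := ltn_ord k; have := ltn_ord x; lia.
by case=> e; rewrite (val_inj e).
Qed.

Definition constc q : sd n q :=
  exist (fun c : 'I_q.+1 -> NE n => forall i j : 'I_q.+1, i <= j -> sval (c i) \subset sval (c j))
    (fun _ => toNE [set k]) (fun _ _ _ => subxx _).

Lemma set1_nT : [set k] != setT.
Proof.
apply/eqP => e; have := cards1 k; rewrite e cardsT card_ord; lia.
Qed.

Lemma pgood_constc q : pgoodP k (img (constc q)).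
Proof.
have e : forall A, A \in img (constc q) -> A = [set k].
  move=> A /imsetP[i _ ->] /=; rewrite toNE_val //.
  by apply/set0Pn; exists k; rewrite inE.
split.
  by apply/negP => /e /esym /eqP; rewrite (negbTE set1_nT).
by move=> A /e ->; rewrite inE.
Qed.

Lemma cocone_one : cocone_prop C k.
Proof.
move=> F nF; exists (fun q c => F q (constc q)); split.
  move=> q q' f c _ /=; rewrite -nF; last exact: pgood_constc.
  by congr (F q' _); apply: sig_eqPI.
move=> q c [nT gd] /=; congr (F q _).
apply: sig_eqPI; apply: functional_extensionality => i /=; apply: sig_eqPI.
have ci : sval (sval c i) \in img c by apply: imset_f.
rewrite toNE_val; last by apply/set0Pn; exists k; rewrite inE.
apply/esym/single; first exact: gd.
by apply: contraNneq nT => <-.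
Qed.
End One.

Lemma cocone_all (C : sSet) (hC : CLF (sharp C)) n (n0 : 0 < n) (k : 'I_n.+1) : cocone_prop C k.
Proof.
case: (leqP n 1) => [n1|n2]; first exact: cocone_one.
pose k1 : 'I_n.+1 := inord 1.
have k1p : 0 < k1 by rewrite /k1 inordK //; lia.
apply: (cocone_swap (b := k1)); apply: cocone_pos.
exact: (proj2 hC n k1 n2 k1p).
Qed.

Section Dir2.
Variables (C : sSet) (n : nat) (n0 : 0 < n) (k : 'I_n.+1) (g : sMap (horn k) (Ex C)).
Local Notation SS := {set 'I_n.+1}.
Implicit Types (A B E : SS).

Definition j0 : 'I_n.+1 := if k == ord0 then inord 1 else ord0.
Lemma j0k : j0 != k.
Proof.
rewrite /j0; have [->|kn] := eqVneq k ord0; last by rewrite eq_sym.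
by apply/eqP => /(congr1 val); rewrite /= inordK //; lia.
Qed.

Definition kconst : dmap n n := @DMap n n (fun _ => k) (fun _ _ _ => leqnn k).
Lemma hc_horn : hornP k (delta_of kconst).
Proof. by exists j0; split; [exact: j0k | move=> i /=; rewrite eq_sym j0k]. Qed.
Definition hc : horn k n := exist _ (delta_of kconst) hc_horn.

Definition hsel E : horn k n :=
  match excluded_middle_informative (hornP k (delta_of (piD E))) with
  | left H => exist _ _ H
  | right _ => hc
  end.

Lemma hsel_val E : E != set0 -> (exists j, j \notin E /\ j != k) ->
  sval (hsel E) = delta_of (piD E).
Proof.
move=> E0 [j [jE jk]]; rewrite /hsel; case: excluded_middle_informative => // nh.
by exfalso; apply: nh; apply: hornP_piR E0 jE jk.
Qed.

Definition top q (c : sd n q) : SS := sval (sval c ord_max).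
Definition F q (c : sd n q) : C q := g n (hsel (top c)) q c.

Lemma sd_fun_fix p (T : {set 'I_p.+1}) q (B : sd p q) :
  (forall i, sval (sval B i) \subset T) -> sd_fun (piD T) B = B.
Proof.
move=> H; apply: sig_eqPI; apply: functional_extensionality => i; apply: sig_eqPI => /=.
exact: piR_imset.
Qed.

Lemma top_sub p q (B : sd p q) i : sval (sval B i) \subset sval (sval B ord_max).
Proof. exact: (proj2_sig B i ord_max (leq_ord i)). Qed.

Lemma link p (y : horn k p) q (B : sd p q) :
  g p y q B = F (sd_fun (dmap_of (sval y)) B).
Proof.
set c' := dmap_of (sval y).
set T := sval (sval B ord_max).
have T0 : T != set0 := proj2_sig (sval B ord_max).
have eB : sd_fun (piD T) B = B by apply: sd_fun_fix => i; apply: top_sub.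
pose E := c' @: T.
have E0 : E != set0 by rewrite imset_eq0.
have hE : exists j, j \notin E /\ j != k.
  have [j [jk Hj]] := proj2_sig y; exists j; split => //.
  by apply/imsetP => -[x _ e]; move: (Hj x) => /eqP; apply; rewrite e.
have e1 : g p y q B = g p (sact (horn k) (piD T) y) q B.
  by rewrite snat /= eB.
rewrite e1.
have e2 : sact (horn k) (piD T) y = sact (horn k) (dcomp c' (piD T)) (hsel E).
  apply: sig_eqPI; apply: sig_eqPI; apply: functional_extensionality => i.
  rewrite /= hsel_val //= [piR E _]piR_id //; rewrite /E; apply/imsetP; exists (piR T i) => //; exact: piR_in.
rewrite e2 snat /= sd_fun_comp eB.
by [].
Qed.

Lemma jE E : E != setT -> E != Dk k -> exists j, j \notin E /\ j != k.
Proof.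
move=> ET ED; apply: NNPP => nj; apply: (negP ED); apply/eqP/setP => x; rewrite !inE.
have [->|xk] := eqVneq x k.
  apply/negbTE/negP => kE; apply: (negP ET); apply/eqP/setP => y; rewrite inE.
  have [->|yk] := eqVneq y k => //; apply: NNPP => yE; apply: nj; exists y; split => //; exact/negP.
by apply: NNPP => xE; apply: nj; exists x; split => //; rewrite ?xk //; apply/negP => H; apply: xE; rewrite H.
Qed.

Definition Qp (V : {set SS}) := setT \notin V /\ Dk k \notin V.

Lemma F_nat : natS Qp F.
Proof.
move=> q q' f c [nT nD].
set E := top c.
have Ei : E \in img c by apply: imset_f.
have E0 : E != set0 := proj2_sig (sval c ord_max).
have hE : exists j, j \notin E /\ j != k.
  by apply: jE; [apply: contraNneq nT => <- | apply: contraNneq nD => <-].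
have L := link (hsel E) (sact (sd n) f c).
rewrite [in RHS]/F -/E -(snat (g n (hsel E))) L.
congr (F _); rewrite hsel_val //.
apply: sig_eqPI; apply: functional_extensionality => i; apply: sig_eqPI => /=.
apply/esym; apply: piR_imset; exact: top_sub.
Qed.
End Dir2.

Theorem dir2 (C : sSet) (qC : quasicategory C) (hC : CLF (sharp C)) : Kan_complex (Ex C).
Proof.
move=> n k n0 g.
pose F0 := fun q (c : sd n q) => @F C n n0 k g q c.
have nF : natS (Qp k) F0 := F_nat n0 g.
have nF' : natS (pgoodP k) F0.
  apply: (natS_imp nF) => V [nT gd]; split => //.
  by apply/negP => /gd; rewrite !inE eqxx.
have [K [nK eK]] := cocone_all hC n0 nF'.
pose G0 := fun q (c : sd n q) => if setT \in img c then K q c else F0 q c.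
have nG0 : natS (S0 k) G0.
  move=> q q' f c [[ch n0' nD] H]; rewrite /G0.
  have sub := img_sact f c.
  case: (boolP (setT \in img c)) => Tc.
    have gd : goodP k (img c) by case: H => // nT; rewrite Tc in nT.
    have gd' : goodP k (img (sact (sd n) f c)) by move=> A Ai; apply: gd; apply: (subsetP sub).
    case: (boolP (setT \in img _)) => Tc'; first by apply: nK.
    by rewrite -eK; [apply: nK | split].
  have Tc' : setT \notin img (sact (sd n) f c) by apply: contra Tc; apply: (subsetP sub).
  by rewrite (negbTE Tc'); apply: nF.
have [G eG] := extend_S0 qC nG0.
have hnat : forall m p (f : dmap m p) (c' : Delta n p),
   sMap_comp G (sd_map (dmap_of (sact (Delta n) f c'))) = sact (Ex C) f (sMap_comp G (sd_map (dmap_of c'))).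
  move=> m p f c'; apply: sMap_eq => q B /=; congr (G q _).
  apply: sig_eqPI; apply: functional_extensionality => i; apply: sig_eqPI => /=.
  by rewrite -imset_comp.
exists (@SMap (Delta n) (Ex C) (fun p c' => sMap_comp G (sd_map (dmap_of c'))) hnat).
move=> p y; apply: sMap_eq => q B /=.
rewrite (link n0 g y B) eG.
  rewrite /G0; case: ifP => // Ti; exfalso.
  have [j [jk Hj]] := proj2_sig y.
  case/imsetP: Ti => i _ /(congr1 (fun A : {set 'I_n.+1} => j \in A)); rewrite inE.
  by move/esym/imsetP => -[x _ e]; move: (Hj x) => /eqP; apply; rewrite e.
have [j [jk Hj]] := proj2_sig y.
have mj : forall A, A \in img (sd_fun (dmap_of (sval y)) B) -> j \notin A.
  move=> A /imsetP[i _ ->] /=; apply/imsetP => -[x _ e].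
  by move: (Hj x) => /eqP; apply; rewrite e.
split; [split|left].
- exact: img_chain.
- exact: img_nz.
- by apply/negP => /mj; rewrite !inE jk.
- by apply/negP => /mj; rewrite inE.
Qed.

Theorem corollary9p7 (C : sSet) :
  quasicategory C -> (Kan_complex (Ex C) <-> CLF (sharp C)).
Proof.
move=> qC; split; last exact: dir2.
move=> KC; split.
  move=> g _; have [h Hh] := qC 2 (@Ordinal 3 1 erefl) isT isT g.
  by exists h; split.
by move=> n k n2 k0 g; apply: dir1.
Qed.
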